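(* Let $G$ be a maximal twelve tone subgroup of $S_{11}$ of signature $(n_1,\dots,n_d)$ with or without crossings, acting on $\mathcal{T}_7$. Then the multiset of sizes of the $G$-orbits of $\mathcal{T}_7$ is the multiset $$\left\{\binom{n_1}{k_1}\binom{n_2}{k_2}\cdots\binom{n_d}{k_d} : k_1,\dots,k_d\in\mathbb{Z}_{\ge 0},\ k_1+\cdots+k_d=6,\ k_i\le n_i \text{ for all } i\right\}$$ (one orbit for each such tuple $(k_1,\dots,k_d)$). Consequently, for all real $t\neq 0$, $$\mathrm{orb}_t(G,\mathcal{T}_7)=\left(\frac{1}{462}\sum \left(\binom{n_1}{k_1}\cdots\binom{n_d}{k_d}\right)^{t+1}\right)^{1/t},$$ the maximal $G$-orbits of $\mathcal{T}_7$ have size $\mathrm{orb}_\infty(G,\mathcal{T}_7)=\max \binom{n_1}{k_1}\cdots\binom{n_d}{k_d}$, and $\mathrm{diam}_t(G,\mathcal{T}_7)=\mathrm{orb}_\infty(G,\mathcal{T}_7)/\mathrm{orb}_t(G,\mathcal{T}_7)$; moreover $462=\binom{11}{6}=\sum \binom{n_1}{k_1}\cdots\binom{n_d}{k_d}$, and the number of $G$-orbits of $\mathcal{T}_7$ equals the number of such tuples $(k_1,\dots,k_d)$. Here all sums and the maximum range over tuples $(k_1,\dots,k_d)$ of nonnegative integers with $k_1+\cdots+k_d=6$ and $k_i\le n_i$ for all $i$.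
   Context: Let $\mathbb{Z}_{12}=\{0,\dots,11\}$ and let $\mathcal{T}_7$ be the set of $7$-element subsets of $\mathbb{Z}_{12}$ containing $0$ ($|\mathcal{T}_7|=462$). $S_{11}$ is the group of permutations of $\{1,\dots,11\}$, extended by $\sigma(0)=0$, acting on $\mathcal{T}_7$ by $\sigma\cdot s=\{\sigma(x):x\in s\}$. For positive integers $n_1+\cdots+n_d=11$, $S_{n_1,\dots,n_d}$ denotes the image of $S_{n_1}\times\cdots\times S_{n_d}\to S_{11}$ where the $i$-th factor permutes the consecutive block $\{n_1+\cdots+n_{i-1}+1,\dots,n_1+\cdots+n_i\}$; a maximal twelve tone group of signature $(n_1,\dots,n_d)$ with or without crossings is any conjugate $\tau S_{n_1,\dots,n_d}\tau^{-1}$, $\tau\in S_{11}$. For a group acting on a finite set $S$: $\mathrm{orb}_t(G,S)=\left(\frac{1}{|S|}\sum_{s\in S}|Gs|^t\right)^{1/t}$ for real $t\ne0$, $\mathrm{orb}_\infty(G,S)=\max_s|Gs|$, and $\mathrm{diam}_t(G,S)=\mathrm{orb}_\infty(G,S)/\mathrm{orb}_t(G,S)$. *)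

(* Defs.v *)
From HB Require Import structures.
From mathcomp Require Import all_boot all_order all_algebra all_fingroup.
From mathcomp Require Import reals exp.
Unset Strict Implicit. Unset Printing Implicit Defensive.
Import Order.TTheory GRing.Theory Num.Theory.

(* Z_12 = 'I_12 (as a set of points; only the set structure matters). *)
Definition Z12 := 'I_12.

(* S_11 : permutations of Z_12 fixing 0 (i.e. permutations of {1,..,11}). *)
Definition S11 : {set {perm Z12}} := [set s : {perm Z12} | s ord0 == ord0].

Definition T7 : {set {set Z12}} :=
  [set A : {set Z12} | (ord0 \in A) && (#|A| == 7)].

(* i-th consecutive block {n_1+..+n_{i-1}+1, ..., n_1+..+n_i} (i 0-based) *)
Definition block (n : seq nat) (i : nat) : {set Z12} :=
  [set x : Z12 | (sumn (take i n) < x) && (x <= sumn (take i.+1 n))].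

(* S_{n_1,...,n_d}: image of S_{n_1} x ... x S_{n_d} in S_11, i.e. the
   permutations fixing 0 that map each block onto itself. *)
Definition young (n : seq nat) : {set {perm Z12}} :=
  [set s : {perm Z12} | (s ord0 == ord0) &&
     [forall i : 'I_(size n), s @: block n i == block n i]].

Definition twelve_tone (n : seq nat) (tau : {perm Z12}) : {set {perm Z12}} :=
  [set (tau * s * tau^-1)%g | s in young n].

Definition signature (n : seq nat) : bool := all (fun m => 0 < m) n && (sumn n == 11).

Definition orbit_of (G : {set {perm Z12}}) (A : {set Z12}) : {set {set Z12}} :=
  [set (fun x : Z12 => (s : {perm Z12}) x) @: A | s in G].

Definition orbits_of (G : {set {perm Z12}}) (S : {set {set Z12}}) :=
  [set orbit_of G A | A in S].

Local Open Scope ring_scope.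

Definition orb_t {R : realType} (G : {set {perm Z12}}) (S : {set {set Z12}}) (t : R) : R :=
  powR ((#|S|%:R)^-1 * \sum_(A in S) powR (#|orbit_of G A|%:R) t) t^-1.

Definition orb_inf (G : {set {perm Z12}}) (S : {set {set Z12}}) : nat :=
  (\max_(A in S) #|orbit_of G A|)%N.

Definition diam_t {R : realType} (G : {set {perm Z12}}) (S : {set {set Z12}}) (t : R) : R :=
  (orb_inf G S)%:R / orb_t G S t.

(* tuples (k_1,...,k_d) of nonnegative integers with sum 6 and k_i <= n_i;
   the bound 'I_7 is harmless since the sum is 6. *)
Definition ktuples (n : seq nat) : {set {ffun 'I_(size n) -> 'I_7}} :=
  [set k : {ffun 'I_(size n) -> 'I_7} |
     ((\sum_i (k i : nat))%N == 6%N) && [forall i, ((k i : nat) <= nth 0%N n i)%N]].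

Definition binprod (n : seq nat) (k : {ffun 'I_(size n) -> 'I_7}) : nat :=
  (\prod_(i < size n) 'C(nth 0%N n i, k i))%N.

(* Main.v *)
Require Import Defs.
From HB Require Import structures.
From mathcomp Require Import all_boot all_order all_algebra all_fingroup.
From mathcomp Require Import reals exp.
From mathcomp Require Import zify.
From Stdlib Require Import Lia.
Set Implicit Arguments. Unset Strict Implicit.

Lemma card_int (a b N : nat) : b < N -> a <= b ->
  #|[set x : 'I_N | (a < x) && (x <= b)]| = b - a.
Proof.
move=> bN ab.
rewrite -sum1_card big_mkcond /=.
transitivity (\sum_(0 <= x < N) (if (a < x <= b) then 1 else 0)); first by rewrite big_mkord; apply: eq_bigr => i _; rewrite inE.
have h1 : 0 <= a.+1 by [].
have h2 : a.+1 <= N by lia.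
have h3 : a.+1 <= b.+1 by lia.
have h4 : b.+1 <= N by lia.
rewrite (big_cat_nat h1 h2) (big_cat_nat h3 h4) /=.
rewrite big1_seq => [|x /andP[_]]; last by rewrite mem_iota; case: ifP => //; lia.
rewrite [X in _ + (_ + X)]big1_seq => [|x /andP[_]]; last by rewrite mem_iota; case: ifP => //; lia.
rewrite (eq_big_seq (fun=> 1)) => [|x]; last by rewrite mem_iota; case: ifP => //; lia.
by rewrite sum_nat_const_nat; lia.
Qed.

Lemma ex_blk (s : seq nat) x : 0 < x <= sumn s ->
  exists2 i, i < size s & sumn (take i s) < x <= sumn (take i.+1 s).
Proof.
elim: s x => [|a s IH] x /=; first by lia.
move=> hx; case: (leqP x a) => hxa.
  by exists 0 => //=; rewrite take0 /=; lia.
have [|i hi hi2] := IH (x - a); first by lia.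
by exists i.+1 => //=; lia.
Qed.

Section Blocks.
Variable n : seq nat.
Hypothesis hn : signature n.
Local Notation S i := (sumn (take i n)).
Local Notation m := (size n).

Lemma S_mono i j : i <= j -> S i <= S j.
Proof. by move=> ij; rewrite -(subnKC ij) takeD sumn_cat leq_addr. Qed.

Lemma S_le i : S i <= 11.
Proof.
case/andP: hn => _ /eqP <-.
by rewrite -{2}(cat_take_drop i n) sumn_cat leq_addr.
Qed.

Lemma S_succ i : i < m -> S i.+1 = S i + nth 0 n i.
Proof. by move=> h; rewrite (take_nth 0 h) sumn_rcons. Qed.

Lemma mem_block (x : Z12) i : (x \in block n i) = (S i < x <= S i.+1).
Proof. by rewrite inE. Qed.

Lemma block_uniq (x : Z12) i j : x \in block n i -> x \in block n j -> i = j.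
Proof.
rewrite !mem_block => /andP[a b] /andP[c d].
case: (ltngtP i j) => // h.
  by have := S_mono h; lia.
by have := S_mono h; lia.
Qed.

Lemma block0 i : (ord0 : Z12) \notin block n i.
Proof. by rewrite mem_block. Qed.

Lemma block_ex (x : Z12) : x != ord0 -> exists i : 'I_m, x \in block n i.
Proof.
move=> hx.
have hs : sumn n = 11 by case/andP: hn => _ /eqP.
have [|i hi hi2] := ex_blk (s := n) (x := x).
  rewrite hs; have := ltn_ord x; have : (x : nat) != 0 by [].
  by lia.
by exists (Ordinal hi); rewrite mem_block.
Qed.

Lemma card_block i : i < m -> #|block n i| = nth 0 n i.
Proof.
move=> hi; rewrite /block card_int.
- by rewrite S_succ //; lia.
- by have := S_le i.+1; lia.
- exact: S_mono.
Qed.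

Lemma sum_block (x : Z12) : \sum_(i < m) (x \in block n i) = (x != ord0).
Proof.
case: eqP => [->|/eqP hx].
  by rewrite big1 // => i _; rewrite (negbTE (block0 _)).
have [i0 hi0] := block_ex hx.
rewrite (bigD1 i0) //= hi0 big1 // => j hj.
case hxj: (x \in block n j) => //; move/negP: hj; case; apply/eqP/val_inj.
by rewrite /= (block_uniq hxj hi0).
Qed.

Lemma card_setI_sum (X B : {set Z12}) : #|X :&: B| = \sum_(x in X) (x \in B).
Proof.
rewrite -sum1_card (eq_bigl (fun x => (x \in X) && (x \in B))); last by move=> x; rewrite inE.
rewrite big_mkcondr /=; apply: eq_bigr => x _; by case: (x \in B).
Qed.

Lemma card_decomp (X : {set Z12}) :
  #|X| = (ord0 \in X) + \sum_(i < m) #|X :&: block n i|.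
Proof.
rewrite (eq_bigr (fun i : 'I_m => \sum_(x in X) (x \in block n i))); last first.
  by move=> i _; rewrite card_setI_sum.
rewrite exchange_big /= (eq_bigr (fun x => (x != ord0) : nat)); last first.
  by move=> x _; rewrite sum_block.
rewrite -sum1_card.
have -> : \sum_(x in X) 1 = \sum_(x in X) (((x == ord0) : nat) + (x != ord0)).
  by apply: eq_bigr => x _; case: (x == ord0).
rewrite big_split /=; congr (_ + _).
rewrite big_mkcond /= (bigD1 ord0) //= big1 ?addn0; first by case: (ord0 \in X).
by move=> x /negbTE ->; case: (x \in X).
Qed.

Lemma card_inter_le (X : {set Z12}) (i : 'I_m) :
  #|X :&: block n i| <= #|X| - (ord0 \in X).
Proof.
rewrite (card_decomp X) (bigD1 i) //=; lia.
Qed.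


Lemma young_fix (s : {perm Z12}) : s \in young n -> s ord0 = ord0.
Proof. by rewrite inE => /andP[/eqP]. Qed.

Lemma young_blk (s : {perm Z12}) (i : 'I_m) : s \in young n -> [set s x | x in block n i] = block n i.
Proof. by rewrite inE => /andP[_ /forallP /(_ i) /eqP]. Qed.

Lemma youngP (s : {perm Z12}) : (s ord0 = ord0) -> (forall i : 'I_m, [set s x | x in block n i] = block n i) ->
  s \in young n.
Proof.
move=> h0 hb; rewrite inE h0 eqxx /=; apply/forallP => i; by rewrite hb.
Qed.

Lemma young1 : 1%g \in young n.
Proof.
apply: youngP => [|i]; first by rewrite perm1.
by rewrite (eq_imset (g := id)) ?imset_id // => x; rewrite perm1.
Qed.

Lemma imsetM (s t : {perm Z12}) (A : {set Z12}) :
  [set (s * t)%g x | x in A] = [set t x | x in [set s x | x in A]].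
Proof.
rewrite -imset_comp; apply: eq_imset => x; by rewrite permM.
Qed.

Lemma young_mul (s t : {perm Z12}) : s \in young n -> t \in young n -> (s * t)%g \in young n.
Proof.
move=> hs ht; apply: youngP => [|i]; first by rewrite permM !young_fix.
by rewrite imsetM !young_blk.
Qed.

Lemma tperm_im (x y : Z12) (B : {set Z12}) : (x \in B) = (y \in B) ->
  [set tperm x y z | z in B] = B.
Proof.
move=> hxy; apply/eqP; rewrite eqEcard card_imset ?leqnn ?andbT; last exact: perm_inj.
apply/subsetP => _ /imsetP[z hz ->].
case: tpermP => [e|e|//]; [by rewrite -hxy -e | by rewrite hxy -e].
Qed.

Lemma young_tperm (x y : Z12) (i : 'I_m) : x \in block n i -> y \in block n i ->
  tperm x y \in young n.
Proof.
move=> hx hy; apply: youngP => [|j].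
  apply/tpermD; apply/eqP => h.
    by move: hx; rewrite h (negbTE (block0 _)).
  by move: hy; rewrite h (negbTE (block0 _)).
apply: tperm_im.
case hxj: (x \in block n j); case hyj: (y \in block n j) => //.
  by move: hyj; rewrite (block_uniq hxj hx) hy.
by move: hxj; rewrite (block_uniq hyj hy) hx.
Qed.

Lemma T7P (A : {set Z12}) : (A \in T7) = (ord0 \in A) && (#|A| == 7).
Proof. by rewrite inE. Qed.

Lemma young_inv (s : {perm Z12}) (A : {set Z12}) : s \in young n -> A \in T7 ->
  [set s x | x in A] \in T7 /\
  forall i : 'I_m, #|[set s x | x in A] :&: block n i| = #|A :&: block n i|.
Proof.
move=> hs; rewrite !T7P => /andP[h0 hc]; split.
  by rewrite -{1}(young_fix hs) mem_imset ?h0 ?card_imset //=; apply: perm_inj.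
move=> i; rewrite -{1}(young_blk i hs) -imsetI; last by move=> a b _ _; apply: perm_inj.
by rewrite card_imset //; apply: perm_inj.
Qed.

Lemma young_trans (A B : {set Z12}) : A \in T7 -> B \in T7 ->
  (forall i : 'I_m, #|B :&: block n i| = #|A :&: block n i|) ->
  exists2 s, s \in young n & B = [set s x | x in A].
Proof.
have [N] := ubnP #|A :\: B|; elim: N A => // N IH A hN hA hB hk.
case: (set_0Vmem (A :\: B)) => [e | [x hx]].
  exists 1%g; first exact: young1.
  rewrite (eq_imset (g := id)) ?imset_id; last by move=> x; rewrite perm1.
  apply/eqP; rewrite eq_sym eqEcard.
  move/eqP: e; rewrite setD_eq0 => ->.
  by move: hA hB; rewrite !T7P => /andP[_ /eqP ->] /andP[_ /eqP ->].
move: (hx); rewrite inE => /andP[xB xA].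
have x0 : x != ord0.
  by apply/eqP => e; move: hB xB; rewrite T7P e => /andP[->].
have [i hi] := block_ex x0.
have [y hy] : exists y, y \in (B :&: block n i) :\: A.
  apply/set0Pn; apply/negP => /eqP e.
  have : B :&: block n i \subset A :&: block n i.
    apply/subsetP => z hz; rewrite in_setI; move: e => /setP /(_ z).
    rewrite in_setD in_set0 hz andbT; move: hz; rewrite in_setI => /andP[_ ->].
    by case: (z \in A).
  move/subset_leqif_cards => [_]; rewrite hk eqxx => /esym/eqP e2.
  have : x \in B :&: block n i by rewrite e2 in_setI xA hi.
  by rewrite in_setI (negbTE xB).
move: hy; rewrite in_setD in_setI => /andP[yA /andP[yB yi]].
have ht := young_tperm hi yi.
have [hA' hk'] := young_inv ht hA.
have hk2 : forall j : 'I_m, #|B :&: block n j| = #|[set tperm x y z | z in A] :&: block n j|.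
  by move=> j; rewrite hk' hk.
have [|s hs ->] := IH [set tperm x y z | z in A] _ hA' hB hk2.
- rewrite -ltnS; apply: leq_trans hN.
  rewrite ltnS (cardsD1 x (A :\: B)) hx add1n ltnS.
  apply: subset_leq_card; apply/subsetP => _ /setDP [/imsetP [w hw ->] hwB].
  move: hwB; case: tpermP => [e | e | hwx hwy].
  + by rewrite yB.
  + by move: hw; rewrite e (negbTE yA).
  + by move=> hwB; rewrite in_setD1 in_setD hw hwB; apply/andP; split => //; exact/eqP.
- exists (tperm x y * s)%g; first exact: young_mul.
  by rewrite imsetM.
Qed.

Definition kof (B : {set Z12}) : {ffun 'I_m -> 'I_7} := [ffun i : 'I_m => inord #|B :&: block n i|].

Lemma kof_val B (i : 'I_m) : B \in T7 -> (kof B i : nat) = #|B :&: block n i|.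
Proof.
move=> hB; rewrite ffunE inordK //.
have := card_inter_le B i; move: hB; rewrite T7P => /andP[-> /eqP ->]; lia.
Qed.

Lemma sum_kof B : B \in T7 -> \sum_(i < m) #|B :&: block n i| = 6.
Proof.
move=> hB; have := card_decomp B; move: hB; rewrite T7P => /andP[-> /eqP ->]; lia.
Qed.

Lemma kof_in B : B \in T7 -> kof B \in ktuples n.
Proof.
move=> hB; rewrite inE; apply/andP; split.
  by rewrite (eq_bigr _ (fun i _ => kof_val i hB)) sum_kof.
apply/forallP => i; rewrite kof_val // -card_block //.
by apply: subset_leq_card; apply: subsetIr.
Qed.

Definition Fk (k : {ffun 'I_m -> 'I_7}) (i : 'I_m) : pred {set Z12} :=
  [pred C : {set Z12} | (C \subset block n i) && (#|C| == k i)].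

Definition gfam (f : {ffun 'I_m -> {set Z12}}) : {set Z12} := ord0 |: \bigcup_(i < m) f i.

Lemma gfamI k (f : {ffun 'I_m -> {set Z12}}) (i : 'I_m) : f \in family (Fk k) -> gfam f :&: block n i = f i.
Proof.
move=> /familyP hf; apply/setP => z; rewrite in_setI in_setU1.
case hz: (z \in f i).
  have := hf i; rewrite inE => /andP[/subsetP sub _].
  rewrite (sub _ hz) andbT; apply/orP; right; apply/bigcupP; by exists i.
apply/negbTE; apply/negP => /andP[/orP[/eqP z0 | /bigcupP [j _ zj]] zb].
  by move: zb; rewrite z0 (negbTE (block0 _)).
have := hf j; rewrite inE => /andP[/subsetP sub _].
have e := block_uniq (sub _ zj) zb.
have ji : j = i by apply: val_inj.
by move: zj; rewrite ji hz.
Qed.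

Lemma gfam_T7 k (f : {ffun 'I_m -> {set Z12}}) : k \in ktuples n -> f \in family (Fk k) ->
  gfam f \in T7 /\ kof (gfam f) = k.
Proof.
move=> hk hf; have hf' := hf; move/familyP: hf' => hf'.
have hfi : forall i : 'I_m, #|gfam f :&: block n i| = k i.
  by move=> i; rewrite (gfamI i hf); have := hf' i; rewrite inE => /andP[_ /eqP].
split.
  rewrite T7P setU11 /= card_decomp setU11 (eq_bigr _ (fun i _ => hfi i)).
  by move: hk; rewrite inE => /andP[/eqP -> _].
by apply/ffunP => i; rewrite ffunE hfi inord_val.
Qed.

Lemma gfam_surj k B : B \in T7 -> kof B = k ->
  [ffun i : 'I_m => B :&: block n i] \in family (Fk k) /\ gfam [ffun i : 'I_m => B :&: block n i] = B.
Proof.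
move=> hB hk; split.
  apply/familyP => i; rewrite ffunE inE subsetIr /= -kof_val // hk.
  by [].
apply/setP => z; rewrite in_setU1.
case: (eqVneq z ord0) => [->|z0] /=.
  by move: hB; rewrite T7P => /andP[-> _].
apply/bigcupP/idP => [[j _]|zB].
  by rewrite ffunE in_setI => /andP[].
have [i hi] := block_ex z0.
by exists i => //; rewrite ffunE in_setI zB hi.
Qed.

Lemma count_k k : k \in ktuples n -> #|[set B in T7 | kof B == k]| = binprod n k.
Proof.
move=> hk.
have -> : [set B in T7 | kof B == k] = [set gfam f | f in family (Fk k)].
  apply/setP => B; rewrite inE; apply/andP/imsetP.
    case=> hB /eqP hkB; have [h1 h2] := gfam_surj hB hkB.
    by exists [ffun i : 'I_m => B :&: block n i].
  case=> f hf ->; have [h1 h2] := gfam_T7 hk hf.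
  by rewrite h1 h2.
rewrite card_in_imset; last first.
  move=> f1 f2 h1 h2 e; apply/ffunP => i.
  by rewrite -(gfamI i h1) -(gfamI i h2) e.
rewrite card_family foldrE big_image /=.
apply: eq_bigr => i _.
rewrite -card_block // -cards_draws.
by apply: eq_card => C; rewrite !inE.
Qed.

End Blocks.

Section Tau.
Variable n : seq nat.
Hypothesis hn : signature n.
Variable tau : {perm Z12}.
Hypothesis htau : tau ord0 = ord0.
Local Notation m := (size n).

Definition kap (B : {set Z12}) := kof n [set tau x | x in B].

Lemma T7_tau (B : {set Z12}) : ([set tau x | x in B] \in T7) = (B \in T7).
Proof.
rewrite !T7P -{1}htau mem_imset ?card_imset //; exact: perm_inj.
Qed.

Lemma conj_im (s : {perm Z12}) (A : {set Z12}) : [set (tau * s * tau^-1)%g x | x in A] =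
  [set (tau^-1)%g x | x in [set s x | x in [set tau x | x in A]]].
Proof. by rewrite !imsetM. Qed.

Lemma im_id (A : {set Z12}) : [set (1%g : {perm Z12}) x | x in A] = A.
Proof. by rewrite (eq_imset (g := id)) ?imset_id // => x; rewrite perm1. Qed.

Lemma imK (A : {set Z12}) : [set (tau^-1)%g x | x in [set tau x | x in A]] = A.
Proof. by rewrite -imsetM mulgV im_id. Qed.

Lemma imKV (A : {set Z12}) : [set tau x | x in [set (tau^-1)%g x | x in A]] = A.
Proof. by rewrite -imsetM mulVg im_id. Qed.

Lemma orbitG (A : {set Z12}) : A \in T7 ->
  orbit_of (twelve_tone n tau) A = [set B in T7 | kap B == kap A].
Proof.
move=> hA; apply/setP => B; rewrite inE; apply/imsetP/andP.
  case=> g /imsetP[s hs ->] ->; rewrite conj_im.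
  have hA' : [set tau x | x in A] \in T7 by rewrite T7_tau.
  have [h1 h2] := young_inv hs hA'.
  split; first by rewrite -T7_tau imKV.
  rewrite /kap imKV; apply/eqP/ffunP => i; by rewrite !ffunE h2.
case=> hB /eqP hk.
have [|||s hs e] := young_trans hn (A := [set tau x | x in A]) (B := [set tau x | x in B]).
- by rewrite T7_tau.
- by rewrite T7_tau.
- move=> i; rewrite -!kof_val ?T7_tau //.
  by move: hk; rewrite /kap => ->.
exists (tau * s * tau^-1)%g; first by apply: imset_f.
by rewrite conj_im -e imK.
Qed.

Lemma kap_in (B : {set Z12}) : B \in T7 -> kap B \in ktuples n.
Proof. by move=> hB; apply: kof_in; rewrite ?T7_tau. Qed.

Lemma count_kap k : k \in ktuples n -> #|[set B in T7 | kap B == k]| = binprod n k.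
Proof.
move=> hk; rewrite -(count_k hn hk).
rewrite -(card_imset _ (imset_inj (@perm_inj _ tau))).
apply: eq_card => C; apply/imsetP/idP.
  case=> B; rewrite inE => /andP[hB hkB] ->.
  by rewrite inE T7_tau hB.
rewrite inE => /andP[hC hkC].
exists [set (tau^-1)%g x | x in C]; last by rewrite imKV.
by rewrite inE /kap imKV hkC andbT -T7_tau imKV.
Qed.

End Tau.

Lemma card_T7 : #|T7| = 462.
Proof.
have -> : 462 = 'C(#|[set~ (ord0 : Z12)]|, 6) by rewrite cardsC1 card_ord.
rewrite -cards_draws.
rewrite -(@card_in_imset _ _ (fun B : {set Z12} => B :\ ord0)); last first.
  move=> A B; rewrite !T7P => /andP[hA _] /andP[hB _] /= e.
  by rewrite -(setD1K hA) -(setD1K hB) e.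
apply: eq_card => D; apply/imsetP/idP.
  case=> B; rewrite T7P => /andP[h0 /eqP hc] ->.
  rewrite inE; apply/andP; split.
    by apply/subsetP => x; rewrite !inE => /andP[].
  by have := cardsD1 ord0 B; rewrite h0 hc => /eqP; rewrite eqSS eq_sym.
rewrite inE => /andP[hs /eqP hc].
have h0 : ord0 \notin D.
  by apply/negP => /(subsetP hs); rewrite !inE eqxx.
exists (ord0 |: D); last by rewrite setU1K.
by rewrite T7P setU11 /= cardsU1 hc h0.
Qed.

Lemma c11 : 'C(11, 6) = 462. Proof. by []. Qed.

Unset Implicit Arguments.
Import Order.TTheory GRing.Theory Num.Theory.
Local Open Scope ring_scope.

Theorem proposition5p1 (R : realType) (n : seq nat) (tau : {perm Z12}) :
  signature n -> tau \in S11 ->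
  let G := twelve_tone n tau in
  perm_eq (map (fun O : {set {set Z12}} => #|O|) (enum (orbits_of G T7)))
          [seq binprod n k | k <- enum (ktuples n)]
  /\ (forall t : R, t != 0 ->
        orb_t G T7 t =
        powR ((462%:R)^-1 * \sum_(k in ktuples n) powR ((binprod n k)%:R) (t + 1)) t^-1)
  /\ orb_inf G T7 = (\max_(k in ktuples n) binprod n k)%N
  /\ (forall t : R, t != 0 ->
        diam_t G T7 t = (orb_inf G T7)%:R / orb_t G T7 t)
  /\ 'C(11, 6) = 462%N
  /\ (\sum_(k in ktuples n) binprod n k)%N = 462%N
  /\ #|orbits_of G T7| = #|ktuples n|.
Proof.
move=> hn htau0 G.
have htau : tau ord0 = ord0 by move: htau0; rewrite inE => /eqP.
pose Ok := fun k => [set B in T7 | kap n tau B == k].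
have orbE : forall A, A \in T7 -> orbit_of G A = Ok (kap n tau A).
  by move=> A hA; apply: orbitG.
have cardO : forall k, k \in ktuples n -> #|Ok k| = binprod n k.
  by move=> k hk; apply: count_kap.
have bpos : forall k, k \in ktuples n -> (0 < binprod n k)%N.
  move=> k hk; rewrite /binprod prodn_gt0 // => i; rewrite bin_gt0.
  by move: hk; rewrite inE => /andP[_ /forallP].
have ne : forall k, k \in ktuples n -> exists A, A \in Ok k.
  by move=> k hk; apply/set0Pn; rewrite -card_gt0 cardO // bpos.
have orbsE : orbits_of G T7 = [set Ok k | k in ktuples n].
  apply/setP => O; apply/imsetP/imsetP.
    case=> A hA ->; exists (kap n tau A); [exact: kap_in | exact: orbE].
  case=> k hk ->; have [A hA] := ne k hk; move: (hA); rewrite inE => /andP[hA7 /eqP hAk].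
  by exists A => //; rewrite orbE // hAk.
have Oinj : {in ktuples n &, injective Ok}.
  move=> k1 k2 h1 _ e; have [A hA] := ne k1 h1; move: (hA); rewrite e inE => /andP[_ /eqP <-].
  by move: hA; rewrite inE => /andP[_ /eqP ->].
have hsum : (\sum_(k in ktuples n) binprod n k)%N = #|T7|.
  rewrite -sum1_card (partition_big (kap n tau) (fun k => k \in ktuples n)) /=; last first.
    by move=> A; apply: kap_in.
  apply: eq_bigr => k hk; rewrite -cardO // -sum1_card; apply: eq_bigl => B.
  by rewrite !inE.
split.
  rewrite orbsE.
  have -> : [seq binprod n k | k <- enum (ktuples n)] =
      map (fun O : {set {set Z12}} => #|O|) (map Ok (enum (ktuples n))).
    rewrite -map_comp; apply/eq_in_map => k; rewrite mem_enum => hk /=; by rewrite cardO.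
  apply: perm_map; apply: uniq_perm.
  - exact: enum_uniq.
  - rewrite map_inj_in_uniq ?enum_uniq // => a b; rewrite !mem_enum; exact: Oinj.
  - move=> O; rewrite mem_enum; apply/imsetP/mapP => [[k hk ->]|[k]]; [exists k; by rewrite ?mem_enum | rewrite mem_enum => hk ->; by exists k].
split.
  move=> t t0; rewrite /orb_t card_T7; congr (powR (_ * _) _).
  rewrite (partition_big (kap n tau) (fun k => k \in ktuples n)) /=; last first.
    by move=> A; apply: kap_in.
  apply: eq_bigr => k hk.
  rewrite (eq_bigr (fun _ => powR (binprod n k)%:R t)); last first.
    by move=> A /andP[hA /eqP hAk]; rewrite orbE // hAk cardO.
  rewrite (eq_bigl (fun B => B \in Ok k)); last by move=> B; rewrite !inE.
  rewrite sumr_const cardO // powRD ?powRr1 ?ler0n ?mulr_natr //.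
  by rewrite pnatr_eq0 -lt0n bpos ?implybT.
split.
  rewrite /orb_inf; apply/eqP; rewrite eqn_leq; apply/andP; split.
    apply/bigmax_leqP => A hA; rewrite orbE // cardO ?kap_in //.
    by apply: leq_bigmax_cond; apply: kap_in.
  apply/bigmax_leqP => k hk; have [A hA] := ne k hk; move: (hA); rewrite inE => /andP[hA7 /eqP e].
  rewrite -cardO // -e -orbE //; exact: leq_bigmax_cond.
split; first by [].
split; first exact: c11.
split; first by rewrite hsum card_T7.
by rewrite orbsE card_in_imset.
Qed.
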